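(* Let $N\ge1$ be odd, let $A=A(h)$ be the $(N+2)\times(N+2)$ matrix defined in the context and $C=e_2^T=(0,1,0,\dots,0)$. Then for every real value of the parameters $h_\alpha,h_\beta,h_1,\dots,h_{N-1}$ the pair $(A,C)$ is unobservable, i.e. the observability matrix $(C^T,\ (CA)^T,\ \dots,\ (CA^{N+1})^T)^T$ has rank strictly less than $N+2$.
   Context: For an integer $N\ge1$ and real parameters $h=(h_\alpha,h_\beta,h_1,\dots,h_{N-1})$, set $(c_1,c_2,c_3,\dots,c_{N+1})=(h_\alpha,h_\beta,h_1,\dots,h_{N-1})$ and let $A(h)$ be the real $(N+2)\times(N+2)$ tridiagonal matrix with $A_{j,j+1}=c_j$, $A_{j+1,j}=-c_j$ for $j=1,\dots,N+1$ and all other entries zero. $e_j$ denotes the $j$-th standard basis column vector. *)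

(* Defs.v *)
(* Real parameters are taken in an arbitrary real field R
   (the statement is purely algebraic). *)
From HB Require Import structures.
From mathcomp Require Import all_boot all_order all_algebra.
Set Implicit Arguments. Unset Strict Implicit. Unset Printing Implicit Defensive.
Import Order.TTheory GRing.Theory Num.Theory.
Local Open Scope ring_scope.

(* Coefficient sequence (c_1,...,c_{N+1}) = (h_alpha, h_beta, h_1, ..., h_{N-1}),
   0-indexed: c 0 = h_alpha, c 1 = h_beta, c (k+2) = h k  (h k = h_{k+1}). *)
Definition coef_seq (R : nzRingType) (N : nat) (ha hb : R) (h : 'I_N.-1 -> R)
  (j : nat) : R :=
  match j with
  | 0 => ha
  | 1 => hb
  | k.+2 => if insub k : option 'I_N.-1 is Some i then h i else 0
  end.

Definition Amat (R : nzRingType) (N : nat) (ha hb : R) (h : 'I_N.-1 -> R)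
  : 'M[R]_(N.+2) :=
  \matrix_(i, j)
    (if j == i.+1 :> nat then @coef_seq R N ha hb h i
     else if i == j.+1 :> nat then - @coef_seq R N ha hb h j
     else 0).

(* C = e_2^T : row vector with a 1 in (1-indexed) position 2. *)
Definition Cvec (R : nzRingType) (N : nat) : 'rV[R]_(N.+2) :=
  \row_(j < N.+2) (if j == 1 :> nat then 1 else 0).

Definition obs_mx (R : nzRingType) (n : nat) (A : 'M[R]_n) (C : 'rV[R]_n)
  : 'M[R]_n :=
  \matrix_(k < n, j < n) (C *m A ^+ k) 0 j.

(* Main.v *)
Require Import Defs.
From HB Require Import structures.
From mathcomp Require Import all_boot all_order all_algebra.
From mathcomp Require Import zify.
Import Order.TTheory GRing.Theory Num.Theory.
Local Open Scope ring_scope.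

Lemma parity_zero (R : realFieldType) (N : nat) (ha hb : R) (h : 'I_N.-1 -> R)
  (k : nat) (j : 'I_N.+2) :
  ~~ odd (j + k) -> (Cvec R N *m (@Amat R N ha hb h) ^+ k) 0 j = 0.
Proof.
elim: k j => [|k IH] j Hj.
  rewrite expr0 mulmx1 !mxE.
  case: eqP => // Hj1; move: Hj; rewrite Hj1 addn0 //.
rewrite exprSr mulmxA mxE big1 // => i _.
case: (boolP (odd (i + k))) => Hi; last by rewrite IH // mul0r.
rewrite !mxE.
case: eqP => [Hji|_].
  by move: Hj; rewrite Hji !addSn addnS /= Hi.
case: eqP => [Hij|_]; last by rewrite mulr0.
by move: Hi Hj; rewrite Hij addSn addnS /=; case: odd.
Qed.

Theorem lemma3 (R : realFieldType) (N : nat) (hN : (1 <= N)%N) (hodd : odd N)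
  (ha hb : R) (h : 'I_N.-1 -> R) :
  (\rank (obs_mx (@Amat R N ha hb h) (Cvec R N)) < N.+2)%N.
Proof.
set M := obs_mx _ _.
pose m := (N.+1)./2.
have hm : m = (N./2).+1.
  have E : N.+1 = (N./2).+1.*2 by rewrite doubleS -[N in LHS]odd_double_half hodd.
  by rewrite /m E half_double.
pose Q : 'M[R]_(m, N.+2) := \matrix_(i, j) (((j : nat) == (2 * i).+1)%:R).
pose d : 'rV[R]_(N.+2) := \row_j ((odd j)%:R).
have QQ : Q^T *m Q = diag_mx d.
  apply/matrixP => j j'; rewrite !mxE.
  case: (boolP (odd j)) => Hj.
    have Hi0 : (j./2 < m)%N.
      have := ltn_ord j; rewrite hm.
      have e1 := odd_double_half j; rewrite Hj in e1.
      have e2 := odd_double_half N; rewrite hodd in e2.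
      rewrite -!muln2 in e1 e2; lia.
    rewrite (bigD1 (Ordinal Hi0)) //= big1.
      rewrite !mxE /= addr0.
      have Ej : (j : nat) == (2 * j./2).+1.
        by rewrite mul2n -{1}(odd_double_half j) Hj.
      rewrite Ej mul1r.
      case: (eqVneq j j') => [<-|Hne]; first by rewrite Ej.
      case: eqP => // E; exfalso; move/eqP: Ej => Ej.
      by move/eqP: Hne; apply; apply: val_inj; rewrite /= Ej E.
    move=> i Hi; rewrite !mxE.
    case: eqP => [E|_]; last by rewrite mul0r.
    exfalso; move/eqP: Hi; apply; apply: val_inj => /=.
    by rewrite E mul2n /= uphalf_double.
  rewrite big1 /=; first by case: (j == j') => //.
  move=> i _; rewrite !mxE.
  case: eqP => [E|_]; last by rewrite mul0r.
  by exfalso; move: Hj; rewrite E /= mul2n odd_double.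
pose M1 : 'M[R]_(N.+2) := \matrix_(k, j) (if odd k then 0 else M k j).
pose M2 : 'M[R]_(N.+2) := \matrix_(k, j) (if odd k then M k j else 0).
have EM : M = M1 *m Q^T *m Q + Q^T *m (Q *m M).
  rewrite -[M1 *m _ *m _]mulmxA [Q^T *m (Q *m M)]mulmxA !QQ mul_mx_diag mul_diag_mx.
  apply/matrixP => k j; rewrite !mxE.
  case: (boolP (odd k)) => Hk.
    by rewrite mul1r mul0r add0r.
  rewrite mul0r addr0.
  case: (boolP (odd j)) => Hj; first by rewrite mulr1.
  have Z := @parity_zero R N ha hb h k j; rewrite mxE in Z.
  rewrite mulr0 Z ?mul0r //.
  by rewrite oddD (negPf Hj) (negPf Hk).
rewrite EM.
apply: (leq_ltn_trans (mxrank_add _ _)).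
have r1 : (\rank (M1 *m Q^T *m Q) <= m)%N by apply: mulmx_max_rank.
have r2 : (\rank (Q^T *m (Q *m M)) <= m)%N by apply: mulmx_max_rank.
have : (m + m < N.+2)%N.
  rewrite hm; have e2 := odd_double_half N; rewrite hodd in e2.
  rewrite -!muln2 in e2; lia.
lia.
Qed.
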